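(* Let $\mathcal B=(\mathcal L,\mathcal R,\omega,\lambda,\rho)$ be a bimachine realizing a transduction $f$. Then $\mathcal L\sqsubseteq \mathit{Left}_f(\mathcal R)$ and $\mathcal R\sqsubseteq\mathit{Right}_f(\mathcal L)$.
   Context: Notation: for words $u\preceq v$ (prefix), $u^{-1}v$ is the word $v'$ with $uv'=v$; $\bigwedge L$ is the longest common prefix of the words of $L$ ($\bigwedge\emptyset=\varepsilon$). A transduction is a partial function $f:\Sigma^*\to\Sigma^*$. A (left) automaton here is a complete deterministic automaton $\mathcal L$ with initial state $l_0$; $[u]_{\mathcal L}$ denotes the state reached from $l_0$ on $u$, and $u\sim_{\mathcal L}v$ iff $[u]_{\mathcal L}=[v]_{\mathcal L}$. A right automaton $\mathcal R=(Q,\Delta,\{r_0\},F)$ is an automaton that is backward deterministic and backward complete (for each $q,\sigma$ there is exactly one $p$ with $(p,\sigma,q)\in\Delta$); it reads words right to left: $[u]_{\mathcal R}$ is the unique state $p$ with a run on $u$ from $p$ to $r_0$, $u$ is accepted iff $[u]_{\mathcal R}\in F$, and $u\sim_{\mathcal R}v$ iff $[u]_{\mathcal R}=[v]_{\mathcal R}$. For two left (resp. right) automata, $\mathcal A_1\sqsubseteq\mathcal A_2$ means $u\sim_{\mathcal A_1}v\Rightarrow u\sim_{\mathcal A_2}v$. A bimachine $\mathcal B=(\mathcal L,\mathcal R,\omega,\lambda,\rho)$ consists of a left automaton $\mathcal L$ (states $Q_{\mathcal L}$, finals $F_{\mathcal L}$) and a right automaton $\mathcal R$ (states $Q_{\mathcal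 R}$, finals $F_{\mathcal R}$) accepting the same language, $\omega:Q_{\mathcal L}\times\Sigma\times Q_{\mathcal R}\to\Sigma^*$, $\lambda:F_{\mathcal R}\to\Sigma^*$, $\rho:F_{\mathcal L}\to\Sigma^*$. It realizes the transduction with domain the accepted language and $u\mapsto\lambda([u]_{\mathcal R})\,\omega([u[1..0]]_{\mathcal L},u[1],[u[2..n]]_{\mathcal R})\cdots\omega([u[1..n-1]]_{\mathcal L},u[n],[\varepsilon]_{\mathcal R})\,\rho([u]_{\mathcal L})$ where $n=|u|$. Left minimization: given $f$ and a right automaton $\mathcal R$ with accepted language $\mathrm{dom}(f)$, let $\widehat f_{[w]_{\mathcal R}}(u)=\bigwedge\{f(uv)\mid v\sim_{\mathcal R}w,\ uv\in\mathrm{dom}(f)\}$, and define $u\sim_L v$ iff for all $w$: $uw\in\mathrm{dom}(f)\Leftrightarrow vw\in\mathrm{dom}(f)$, and if $uw\in\mathrm{dom}(f)$ then $\widehat f_{[w]_{\mathcal R}}(u)^{-1}f(uw)=\widehat f_{[w]_{\mathcal R}}(v)^{-1}f(vw)$. This is a right congruence; $\mathit{Left}_f(\mathcal R)$ is the deterministic automaton with states $\Sigma^*/{\sim_L}$, transitions $([u],\sigma,[u\sigma])$, initial state $[\varepsilon]$ and final states $\{[u]\mid u\in\mathrm{dom}(f)\}$. $\mathit{Right}_f(\mathcal L)$ is defined symmetrically (mirror construction): it is the right automaton obtained by applying $\mathit{Left}$ to the mirrored transduction $w\mapsto \overline{f(\overline w)}$ (where $\overline{x}$ is the mirror image of $x$)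 and the mirror of $\mathcal L$, and mirroring the result back. *)

(* Defs.v *)
From Stdlib Require Import ClassicalEpsilon.
From mathcomp Require Import all_boot.
Set Implicit Arguments. Unset Strict Implicit. Unset Printing Implicit Defensive.

Section Words.
Variable S : eqType.

(* u^{-1} v : drop the prefix u from v (used only when u is a prefix of v). *)
Definition lquot (u v : seq S) : seq S := drop (size u) v.

Definition is_lcp (P : seq S -> Prop) (p : seq S) : Prop :=
  ((forall x, ~ P x) -> p = [::]) /\
  ((exists x, P x) ->
     (forall x, P x -> prefix p x) /\
     (forall q, (forall x, P x -> prefix q x) -> prefix q p)).

Definition lcp (P : seq S -> Prop) : seq S :=
  epsilon (inhabits [::]) (is_lcp P).
End Words.

Record LeftAut (S : finType) := {
  lQ : finType;
  l0 : lQ;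
  ldelta : lQ -> S -> lQ;
  lfin : lQ -> bool }.

(* Right automaton: backward deterministic and backward complete, so the
   transition relation is the graph of a function: (p, s, q) in Delta iff
   p = rback q s. *)
Record RightAut (S : finType) := {
  rQ : finType;
  r0 : rQ;
  rback : rQ -> S -> rQ;
  rfin : rQ -> bool }.

Definition lstate S (A : LeftAut S) (u : seq S) : lQ A :=
  foldl (@ldelta S A) (@l0 S A) u.
(* [u]_R : the unique state p with a run on u from p to r0 *)
Definition rstate S (A : RightAut S) (u : seq S) : rQ A :=
  foldr (fun s q => @rback S A q s) (@r0 S A) u.

Record bimachine (S : finType) := {
  bmL : LeftAut S;
  bmR : RightAut S;
  bm_omega : lQ bmL -> S -> rQ bmR -> seq S;
  bm_lambda : rQ bmR -> seq S;   (* only relevant on final states of R *)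
  bm_rho : lQ bmL -> seq S;      (* only relevant on final states of L *)
  bm_same_lang : forall u, lfin (lstate bmL u) = rfin (rstate bmR u) }.

Fixpoint bm_mid S (B : bimachine S) (p : lQ (bmL B)) (u : seq S) : seq S :=
  match u with
  | [::] => [::]
  | s :: u' => bm_omega p s (rstate (bmR B) u') ++
               bm_mid (@ldelta S (bmL B) p s) u'
  end.

Definition bm_out S (B : bimachine S) (u : seq S) : option (seq S) :=
  if lfin (lstate (bmL B) u) then
    Some (bm_lambda (rstate (bmR B) u) ++ bm_mid (@l0 S (bmL B)) u
          ++ bm_rho (lstate (bmL B) u))
  else None.

Definition transduction (S : finType) := seq S -> option (seq S).

Definition realizes S (B : bimachine S) (f : transduction S) : Prop :=
  forall u, f u = bm_out B u.

Definition fhat S (f : transduction S) (R : RightAut S) (w u : seq S) : seq S :=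
  lcp (fun x => exists v, rstate R v = rstate R w /\ f (u ++ v) = Some x).

Definition simLeft S (f : transduction S) (R : RightAut S) (u v : seq S) : Prop :=
  forall w,
    (f (u ++ w) <> None <-> f (v ++ w) <> None) /\
    (forall y y', f (u ++ w) = Some y -> f (v ++ w) = Some y' ->
       lquot (fhat f R w u) y = lquot (fhat f R w v) y').

(* The state of Left_f(R) reached on u, i.e. the class [u] of ~_L. *)
Definition Left_state S (f : transduction S) (R : RightAut S) (u : seq S)
  : seq S -> Prop := fun w => simLeft f R u w.

Definition mirror_f S (f : transduction S) : transduction S :=
  fun w => omap (@rev S) (f (rev w)).

(* the mirror of a left automaton, seen as a right automaton reading
   mirrored words: [w]_{mirror L} = [rev w]_L *)
Definition mirror_left S (A : LeftAut S) : RightAut S :=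
  {| rQ := lQ A; r0 := @l0 S A; rback := @ldelta S A; rfin := @lfin S A |}.

(* The state of Right_f(L) reached on u (reading right to left):
   mirror of Left_{mirror f}(mirror L), so it is the class of rev u. *)
Definition Right_state S (f : transduction S) (L : LeftAut S) (u : seq S)
  : seq S -> Prop := Left_state (mirror_f f) (mirror_left L) (rev u).

Definition sqsub_Left S (L : LeftAut S) (f : transduction S) (R : RightAut S) :=
  forall u v, lstate L u = lstate L v -> Left_state f R u = Left_state f R v.

Definition sqsub_Right S (R : RightAut S) (f : transduction S) (L : LeftAut S) :=
  forall u v, rstate R u = rstate R v -> Right_state f L u = Right_state f L v.

(* Main.v *)
Require Import Defs.
From Stdlib Require Import ClassicalEpsilon Classical FunctionalExtensionality PropExtensionality.
From mathcomp Require Import all_boot.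
Set Implicit Arguments. Unset Strict Implicit. Unset Printing Implicit Defensive.
Section L.
Variable S : eqType.
Implicit Types (P Q : seq S -> Prop) (a p q x y : seq S).

Lemma nat_max (R : nat -> Prop) N : R 0 ->
  exists k, k <= N /\ R k /\ (k < N -> ~ R k.+1).
Proof.
move=> R0; elim: N => [|N [k [kN [Rk Hk]]]]; first by exists 0.
have [kN'|Nk] := ltnP k N.
  by exists k; split; [exact: ltnW|split=> // _; apply: Hk].
have kE : k = N by apply/eqP; rewrite eqn_leq kN Nk.
subst k.
case: (classic (R N.+1)) => H.
  by exists N.+1; split=> //; split=> //; rewrite ltnn.
by exists N; split=> //; split=> // _.
Qed.

Lemma lcp_exists P : exists p, is_lcp P p.
Proof.
case: (classic (exists x, P x)) => [[x0 Px0]|NE]; last first.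
  exists [::]; split=> // E; by case: (NE E).
pose R k := forall x, P x -> prefix (take k x0) x.
have R0 : R 0 by move=> x _; rewrite take0 prefix0s.
have [k [kN [Rk Hk]]] := nat_max (size x0) R0.
exists (take k x0); split; first by move=> H; case: (H x0).
move=> _; split=> // q Hq.
have qx0 : q = take (size q) x0 by move: (Hq _ Px0); rewrite prefixE => /eqP.
have Rq : R (size q) by move=> x Px; rewrite -qx0; exact: Hq.
have sq : size q <= k.
  rewrite leqNgt; apply/negP => kq.
  have kN' : k < size x0.
    by apply: (leq_trans kq); have := size_prefix (Hq _ Px0).
  apply: (Hk kN') => x Px; apply: prefix_trans (Rq _ Px).
  by rewrite -(take_takel _ kq); exact: prefix_take.
by rewrite qx0 -(take_takel _ sq); exact: prefix_take.
Qed.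

Lemma lcp_spec P : is_lcp P (lcp P).
Proof.
rewrite /lcp; apply: epsilon_spec; exact: lcp_exists.
Qed.

Lemma prefix_anti p q : prefix p q -> prefix q p -> p = q.
Proof.
move=> /prefixP [s ->] /prefixP [t].
move=> E; have := congr1 size E; rewrite !size_cat -addnA -{1}(addn0 (size p)).
move/eqP; rewrite eqn_add2l eq_sym addn_eq0 => /andP [/nilP -> _].
by rewrite cats0.
Qed.

Lemma is_lcp_unique P p q : is_lcp P p -> is_lcp P q -> p = q.
Proof.
move=> [Hp1 Hp2] [Hq1 Hq2].
case: (classic (exists x, P x)) => [E|NE]; last first.
  have H : forall x, ~ P x by move=> x Px; apply: NE; exists x.
  by rewrite (Hp1 H) (Hq1 H).
have [Ap Mp] := Hp2 E; have [Aq Mq] := Hq2 E.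
by apply: prefix_anti; [apply: Mq | apply: Mp].
Qed.

Lemma prefix_cat2 a p y : prefix (a ++ p) (a ++ y) = prefix p y.
Proof. by rewrite prefix_catr // eqxx. Qed.

Lemma lcp_cat P Q a : (exists x, P x) ->
  (forall x, Q x <-> exists y, P y /\ x = a ++ y) -> lcp Q = a ++ lcp P.
Proof.
move=> [y0 Py0] HQ; apply: (is_lcp_unique (lcp_spec Q)).
have [_ HP] := lcp_spec P; have [Ap Mp] := HP (ex_intro _ y0 Py0).
split.
  by move=> H; case: (H (a ++ y0)); apply/HQ; exists y0.
move=> _; split.
  by move=> x /HQ [y [Py ->]]; rewrite prefix_cat2; apply: Ap.
move=> q Hq.
have Hq0 : prefix q (a ++ y0) by apply: Hq; apply/HQ; exists y0.
case: (leqP (size q) (size a)) => sq.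
  apply: prefix_catl; move: Hq0; rewrite !prefixE take_cat.
  case E: (size q == size a).
    by move/eqP: E => E; rewrite E ltnn subnn take0 cats0 take_size.
  by rewrite ltn_neqAle E sq.
have qE : q = a ++ drop (size a) q.
  move: Hq0; rewrite prefixE => /eqP qE.
  rewrite -{1}(cat_take_drop (size a) q); congr (_ ++ _).
  by rewrite -qE take_takel ?(ltnW sq) // take_size_cat.
rewrite qE prefix_cat2; apply: Mp => y Py.
by rewrite -(prefix_cat2 a) -qE; apply: Hq; apply/HQ; exists y.
Qed.
End L.
Section K.
Variables (S : finType) (f : transduction S) (R : RightAut S).

Lemma simLeft_sym u v : simLeft f R u v -> simLeft f R v u.
Proof.
move=> H w; have [H1 H2] := H w; split; first by split; apply H1.
by move=> y y' E E'; symmetry; apply: H2.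
Qed.

Lemma simLeft_trans u v x : simLeft f R u v -> simLeft f R v x -> simLeft f R u x.
Proof.
move=> H H' w; have [H1 H2] := H w; have [H1' H2'] := H' w; split.
  by split=> ?; [apply H1'; apply H1 | apply H1; apply H1'].
move=> y y'' E E''.
case E': (f (v ++ w)) => [y'|]; last by exfalso; apply: (proj1 H1); rewrite ?E.
by rewrite (H2 _ _ E E') (H2' _ _ E' E'').
Qed.

Lemma Left_state_eq u v : simLeft f R u v -> Left_state f R u = Left_state f R v.
Proof.
move=> H; apply: functional_extensionality => x; apply: propositional_extensionality.
split=> Hx; rewrite /Left_state in Hx *.
  exact: simLeft_trans (simLeft_sym H) Hx.
exact: simLeft_trans H Hx.
Qed.

Lemma key (L : LeftAut S) (C : lQ L -> seq S -> option (seq S)) :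
  (forall u, exists a : rQ R -> seq S, forall w,
     f (u ++ w) = omap (cat (a (rstate R w))) (C (lstate L u) w)) ->
  sqsub_Left L f R.
Proof.
move=> HC u v Euv; apply: Left_state_eq => w.
have [au Hu] := HC u; have [av Hv] := HC v.
rewrite !Hu !Hv Euv; split.
  by case: (C _ w).
case Ec: (C (lstate L v) w) => [c|] //= y y' [<-] [<-].
pose P x := exists v', rstate R v' = rstate R w /\ C (lstate L v) v' = Some x.
have NE : exists x, P x by exists c, w.
have Hf : forall a u', (forall w', f (u' ++ w') = omap (cat (a (rstate R w'))) (C (lstate L v) w')) ->
   fhat f R w u' = a (rstate R w) ++ lcp P.
  move=> a u' Hw; apply: lcp_cat => // x; split.
    move=> [v' [E1 E2]]; move: E2; rewrite Hw E1.
    by case E3: (C _ v') => [z|] //= [<-]; exists z; split=> //; exists v'.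
  by move=> [z [[v' [E1 E2]] ->]]; exists v'; rewrite Hw E1 E2.
rewrite (Hf au u) ?(Hf av v) //; last by move=> w'; rewrite Hu Euv.
by rewrite /lquot !size_cat !drop_cat ltnNge leq_addr /= addKn
           ltnNge leq_addr /= addKn.
Qed.
End K.
Section D.
Variables (S : finType) (B : bimachine S).
Local Notation L := (bmL B).
Local Notation R := (bmR B).

Definition rfrom (r : rQ R) (x : seq S) := foldr (fun s q => @rback S R q s) r x.
Definition lfrom (p : lQ L) (x : seq S) := foldl (@ldelta S L) p x.

Fixpoint midr (p : lQ L) (u : seq S) (r : rQ R) : seq S :=
  match u with
  | [::] => [::]
  | s :: u' => bm_omega p s (rfrom r u') ++ midr (@ldelta S L p s) u' r
  end.

Lemma mid_cat p x y : bm_mid p (x ++ y) = midr p x (rstate R y) ++ bm_mid (lfrom p x) y.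
Proof.
elim: x p => [|s x IH] p //=.
by rewrite IH catA /rstate foldr_cat.
Qed.

Lemma out_cat x y : bm_out B (x ++ y) =
  if rfin (rfrom (rstate R y) x) then
    Some (bm_lambda (rfrom (rstate R y) x) ++ midr (@l0 S L) x (rstate R y)
          ++ bm_mid (lstate L x) y ++ bm_rho (lfrom (lstate L x) y))
  else None.
Proof.
rewrite /bm_out bm_same_lang mid_cat.
have -> : rstate R (x ++ y) = rfrom (rstate R y) x by rewrite /rstate foldr_cat.
have -> : lstate L (x ++ y) = lfrom (lstate L x) y by rewrite /lstate foldl_cat.
by case: ifP => //; rewrite !catA.
Qed.

Lemma out_cat' x y : bm_out B (x ++ y) =
  if lfin (lfrom (lstate L x) y) then
    Some (bm_lambda (rfrom (rstate R y) x) ++ midr (@l0 S L) x (rstate R y)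
          ++ bm_mid (lstate L x) y ++ bm_rho (lfrom (lstate L x) y))
  else None.
Proof.
rewrite out_cat.
have -> : lfrom (lstate L x) y = lstate L (x ++ y) by rewrite /lstate foldl_cat.
have -> : rfrom (rstate R y) x = rstate R (x ++ y) by rewrite /rstate foldr_cat.
by rewrite bm_same_lang.
Qed.
End D.

Theorem proposition3p3 (S : finType) (B : bimachine S) (f : transduction S) :
  realizes B f ->
  sqsub_Left (bmL B) f (bmR B) /\ sqsub_Right (bmR B) f (bmL B).
Proof.
move=> Hr; split.
  apply: (@key _ f _ _ (fun p w => if lfin (lfrom p w) then
            Some (bm_mid p w ++ bm_rho (lfrom p w)) else None)) => u.
  exists (fun r => bm_lambda (rfrom r u) ++ midr (@l0 S (bmL B)) u r) => w.
  by rewrite Hr out_cat'; case: ifP => //= _; rewrite !catA.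
pose L' : LeftAut S := {| lQ := rQ (bmR B); l0 := r0 (bmR B);
  ldelta := @rback S (bmR B); lfin := @rfin S (bmR B) |}.
have HL : forall u, lstate L' u = rstate (bmR B) (rev u).
  by move=> u; rewrite -{1}(revK u) /lstate /rstate foldl_rev.
have HR : forall w, rstate (mirror_left (bmL B)) w = lstate (bmL B) (rev w).
  by move=> w; rewrite /lstate /rstate foldl_rev.
have K : sqsub_Left L' (mirror_f f) (mirror_left (bmL B)).
  apply: (@key S (mirror_f f) (mirror_left (bmL B)) L' (fun (q : rQ (bmR B)) w => if rfin (rfrom q (rev w)) then
     Some (rev (midr (@l0 S (bmL B)) (rev w) q) ++ rev (bm_lambda (rfrom q (rev w))))
     else None)) => u.
  exists (fun r => rev (bm_rho (lfrom r (rev u))) ++ rev (bm_mid r (rev u))) => w.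
  rewrite /mirror_f rev_cat Hr out_cat HL HR.
  case: ifP => //= _; rewrite !rev_cat !catA //.
move=> u v E; rewrite /Right_state; apply: K.
by rewrite !HL !revK.
Qed.
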